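(* Let $A=(a(x),dF(x))$ and $B=(b(x),dF(x))$ be games, assume $f(p)\ge h(p)$ for each $p\in[0,1]$, and let $L:=\sup_{0<p<1}g(p)+1$. Then $V(p,t,u):=\int\log\big(\frac{pa(x)+(1-p)b(x)}{u}t-t+1\big)\,dF(x)$ is continuous on $\overline{D}=\{(p,t,u):0\le p\le1,\ 0\le t\le1,\ f(p)\le u\le L\}$.
   Context: A game is a pair $(a(x),dF(x))$ with $dF$ a probability measure on $\mathbb{R}$ and $a\ge0$ measurable with finite positive integral. A real $r$ is fixed; conventions $\exp(-\infty)=0$, $1/(+\infty)=0$. For $p\in[0,1]$ put $c_p(x):=pa(x)+(1-p)b(x)$, $f(p):=\exp(\int\log c_p\,dF)/e^r$, $h(p):=1/\int\frac{1}{c_p(x)}dF(x)$. $g(p)$ denotes the value $u>0$ such that for some $t_u$ (with $0<t_u\le1$) the system $\exp\big(\int\log(\frac{c_p(x)}{u}t_u-t_u+1)\,dF(x)\big)=e^r$, $\int\frac{c_p(x)-u}{c_p(x)t_u-ut_u+u}\,dF(x)=0$ holds; such a solution is unique when it exists, and it exists for every $p$ under the hypothesis $f\ge h$. *)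

(* Defs.v *)
(* R : realType, the "real line" with its
   Borel sigma-algebra; dF is a probability measure P on it. *)
From HB Require Import structures.
From mathcomp Require Import all_boot all_order all_algebra.
From mathcomp Require Import all_classical all_reals all_analysis.
Set Implicit Arguments.
Unset Strict Implicit.
Unset Printing Implicit Defensive.
Import Order.TTheory GRing.Theory Num.Theory.
Import numFieldNormedType.Exports.
Local Open Scope classical_set_scope.
Local Open Scope ring_scope.

Definition game (R : realType) (P : probability R R) (a : R -> R) : Prop :=
  [/\ measurable_fun setT a, (forall x, 0 <= a x),
      P.-integrable setT (EFin \o a) & (0 < \int[P]_x (a x)%:E)%E].

(* extended logarithm: log 0 = -oo (arguments are always >= 0 here) *)
Definition elog (R : realType) (y : R) : \bar R :=
  if y <= 0 then -oo%E else (ln y)%:E.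

(* extended exponential: exp(-oo) = 0 (+oo never occurs: positive parts
   are integrable; sent to 0 arbitrarily) *)
Definition eexp (R : realType) (y : \bar R) : R :=
  match y with EFin z => expR z | _ => 0 end.

Definition einv (R : realType) (y : \bar R) : R :=
  match y with EFin z => z^-1 | _ => 0 end.

Section defs.
Variables (R : realType) (P : probability R R) (a b : R -> R) (r : R).

Definition cp (p : R) (x : R) : R := p * a x + (1 - p) * b x.

Definition fgame (p : R) : R := eexp (\int[P]_x elog (cp p x)) / expR r.

Definition hgame (p : R) : R :=
  einv (\int[P]_x (if cp p x == 0%R then +oo%E else ((cp p x)^-1)%:E)).

Definition Vgame (p t u : R) : \bar R :=
  (\int[P]_x elog (cp p x / u * t - t + 1)%R)%E.

(* (u, t_u) solves the system defining g(p); the integrand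
   (c-u)/(c t - u t + u) equals -oo when the denominator vanishes
   (this happens only for t = 1, c = 0, where the numerator is -u < 0) *)
Definition gsol (p u : R) : Prop :=
  0 < u /\ exists t : R, [/\ 0 < t, t <= 1,
    eexp (Vgame p t u) = expR r &
    (\int[P]_x (let d := (cp p x * t - u * t + u)%R in
                 if d == 0%R then -oo else ((cp p x - u) / d)%R%:E))%E = 0%E].

(* L = sup_{0<p<1} g(p) + 1, taken in the extended reals; since the solution
   of the system is unique, {u | exists p in (0,1), gsol p u} = {g(p) | 0<p<1} *)
Definition Lgame : \bar R :=
  (ereal_sup [set u%:E | u in [set u : R | exists p : R, (0 < p < 1)%R /\ gsol p u]] + 1)%E.

Definition Dbar : set (R * R * R) :=
  [set q | let: (p, t, u) := q in
     [/\ 0 <= p <= 1, 0 <= t <= 1, fgame p <= u, 0 < u & (u%:E <= Lgame)%E]].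

End defs.

(* Main.v *)
Require Import Defs.
From HB Require Import structures.
From mathcomp Require Import all_boot all_order all_algebra.
From mathcomp Require Import all_classical all_reals all_analysis measurable_realfun.
From mathcomp Require Import ring lra.
Import Order.TTheory GRing.Theory Num.Theory.
Import numFieldNormedType.Exports.
Import Num.Def.
Local Open Scope classical_set_scope.
Local Open Scope ring_scope.

Set Implicit Arguments.
Unset Strict Implicit.
Section pw.
Variable R : realType.
Implicit Types y z : R.

Definition pos y : \bar R := (ln (maxr y 1))%:E.
Definition neg y : \bar R := if y <= 0 then +oo%E else (maxr (- ln y) 0)%:E.

Lemma elog_pos y : maxe (elog y) 0%E = pos y.
Proof.
rewrite /elog /pos; have [y0|y0] := leP y 0.
  by rewrite max_r ?leNye// max_r ?ln1// (le_trans y0).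
have [y1|y1] := leP y 1.
  by rewrite max_r ?ln1// lee_fin ln_le0.
by rewrite max_l ?lee_fin ?(ltW y1)// ltW// ln_gt0.
Qed.

Lemma elog_neg y : maxe (- elog y)%E 0%E = neg y.
Proof.
rewrite /elog /neg; have [y0|y0] := leP y 0.
  by rewrite max_l ?leey.
by rewrite -EFinN -EFin_max.
Qed.

Lemma pos_ge0 y : (0 <= pos y)%E.
Proof. by rewrite lee_fin ln_ge0// le_max lexx orbT. Qed.

Lemma neg_ge0 y : (0 <= neg y)%E.
Proof. by rewrite /neg; case: ifP => _; rewrite ?leey// lee_fin le_max lexx orbT. Qed.

Lemma pos_le y : 0 <= y -> (pos y <= y%:E)%E.
Proof.
move=> y0; rewrite /pos lee_fin; have [y1|y1] := leP y 1.
  by rewrite ln1.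
have := @le_ln1Dx R (y - 1); rewrite addrCA subrr addr0 => h.
apply: le_trans (h _) _; lra.
Qed.

Lemma pos_up y y0 e : 0 <= y0 -> 0 <= e -> y <= y0 + e ->
  (pos y <= pos y0 + e%:E)%E.
Proof.
move=> y00 e0 yle; rewrite /pos -EFinD lee_fin.
set m := maxr y0 1.
have m1 : 1 <= m by rewrite le_max lexx orbT.
have m0 : 0 < m by apply: lt_le_trans m1.
have h1 : maxr y 1 <= m * (1 + e).
  rewrite ge_max; apply/andP; split.
    apply: (le_trans yle); have : y0 <= m by rewrite le_max lexx.
    move=> h; rewrite mulrDr mulr1; apply: lerD => //.
    by rewrite -{1}(mul1r e) ler_wpM2r.
  rewrite -(mulr1 1) ler_pM//; lra.
have mx0 : 0 < maxr y 1 by rewrite lt_max ltr01 orbT.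
apply: (le_trans (y := ln (m * (1 + e)))).
  rewrite ler_ln// posrE mulr_gt0//; lra.
rewrite lnM ?posrE//; last lra.
apply: lerD => //; apply: le_ln1Dx; lra.
Qed.


Lemma pos_down y y0 l : 1 <= l -> 0 <= y0 -> y0 / l <= y ->
  (pos y0 <= pos y + (ln l)%:E)%E.
Proof.
move=> l1 y00 yle; rewrite /pos -EFinD lee_fin.
have l0 : 0 < l by lra.
have mx0 : 0 < maxr y 1 by rewrite lt_max ltr01 orbT.
have my0 : 0 < maxr y0 1 by rewrite lt_max ltr01 orbT.
rewrite -lnM ?posrE// ler_ln ?posrE ?mulr_gt0//.
rewrite ge_max; apply/andP; split.
  have : y0 <= y * l by rewrite -ler_pdivrMr.
  move=> h; apply: (le_trans h); rewrite ler_pM2r// le_max lexx//.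
have : 1 <= maxr y 1 by rewrite le_max lexx orbT.
move=> h; nra.
Qed.

Lemma neg_down y y0 l : 1 <= l -> 0 <= y0 -> y0 / l <= y ->
  (neg y <= neg y0 + (ln l)%:E)%E.
Proof.
move=> l1 y00 yle; rewrite /neg.
have [y0n|y0p] := leP y0 0; first by rewrite addye ?leey.
have l0 : 0 < l by lra.
have yp : 0 < y by apply: lt_le_trans yle; rewrite divr_gt0.
rewrite (ifN _ _ ); last by rewrite -ltNge.
rewrite -EFinD lee_fin.
have lnl : 0 <= ln l by rewrite ln_ge0.
have : ln (y0 / l) <= ln y by rewrite ler_ln ?posrE ?divr_gt0.
rewrite lnM ?posrE ?invr_gt0// lnV ?posrE// => h.
rewrite ge_max; apply/andP; split.
  apply: le_trans (_ : - ln y0 + ln l <= _); first lra.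
  by rewrite lerD2r le_max lexx.
apply: le_trans (_ : 0 + ln l <= _); first lra.
by rewrite lerD2r le_max lexx orbT.
Qed.

Lemma neg_anti y y' : y <= y' -> (neg y' <= neg y)%E.
Proof.
move=> yy; rewrite /neg.
have [yn|yp] := leP y 0; first by case: ifP => _; rewrite ?leey.
have y'p : 0 < y' by apply: lt_le_trans yy.
rewrite (ifN _ _ ); last by rewrite -ltNge.
rewrite lee_fin; rewrite ge_max; apply/andP; split; last by rewrite le_max lexx orbT.
have : ln y <= ln y' by rewrite ler_ln ?posrE.
move=> h; apply: le_trans (_ : - ln y <= _); first lra.
by rewrite le_max lexx.
Qed.

End pw.
Arguments pos {R}.
Arguments neg {R}.

Lemma intcst (R : realType) (P : probability R R) (c : R) : (\int[P]_x c%:E)%E = c%:E.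
Proof.
rewrite integral_cst//.
match goal with |- context [(_ * ?X)%E] => have -> : X = 1%E by exact: probability_setT end.
by rewrite mule1.
Qed.

Unset Implicit Arguments.
Set Strict Implicit.

Section meas.
Variables (R : realType) (P : probability R R) (a b : R -> R).
Hypotheses (ma : measurable_fun setT a) (mb : measurable_fun setT b).
Hypotheses (a0 : forall x, 0 <= a x) (b0 : forall x, 0 <= b x).
Hypotheses (ia : P.-integrable setT (EFin \o a)) (ib : P.-integrable setT (EFin \o b)).

Definition Lf (k1 k2 k3 : R) x := k1 * a x + k2 * b x + k3.

Lemma mLf k1 k2 k3 : measurable_fun setT (Lf k1 k2 k3).
Proof.
apply: measurable_funD => //; apply: measurable_funD => //;
  by apply: measurable_funM.
Qed.

Lemma melog : measurable_fun setT (@elog R).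
Proof.
rewrite /elog; apply: measurable_fun_if => //.
- by apply: measurable_fun_ler.
- by apply: measurable_funTS; apply: measurableT_comp => //; exact: measurable_ln.
Qed.

Lemma mpos (h : R -> R) : measurable_fun setT h -> measurable_fun setT (fun x => pos (h x)).
Proof.
move=> mh.
have -> : (fun x => pos (h x)) = (fun x => elog (h x))^\+%E.
  by apply/funext => x; rewrite funeposE elog_pos.
apply: measurable_funepos; exact: measurableT_comp melog mh.
Qed.

Lemma mneg (h : R -> R) : measurable_fun setT h -> measurable_fun setT (fun x => neg (h x)).
Proof.
move=> mh.
have -> : (fun x => neg (h x)) = (fun x => elog (h x))^\-%E.
  by apply/funext => x; rewrite funenegE elog_neg.
apply: measurable_funeneg; exact: measurableT_comp melog mh.
Qed.

Lemma fin_int (f : R -> R) : P.-integrable setT (EFin \o f) -> (forall x, 0 <= f x) ->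
  exists I : R, (\int[P]_x (f x)%:E)%E = I%:E /\ 0 <= I.
Proof.
move=> fi f0.
have h1 := integrable_lty measurableT fi.
have h0 : (0 <= \int[P]_x (f x)%:E)%E by apply: integral_ge0 => x _; rewrite lee_fin.
exists (fine (\int[P]_x (f x)%:E)); split.
  by rewrite fineK// ge0_fin_numE.
by rewrite fine_ge0.
Qed.

Definition Ia := fine (\int[P]_x (a x)%:E)%E.
Definition Ib := fine (\int[P]_x (b x)%:E)%E.
Lemma IaE : (\int[P]_x (a x)%:E)%E = Ia%:E /\ 0 <= Ia.
Proof.
have [I [h1 h2]] := fin_int a ia a0. by rewrite /Ia h1.
Qed.
Lemma IbE : (\int[P]_x (b x)%:E)%E = Ib%:E /\ 0 <= Ib.
Proof.
have [I [h1 h2]] := fin_int b ib b0. by rewrite /Ib h1.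
Qed.

Lemma intLf k1 k2 k3 : 0 <= k1 -> 0 <= k2 -> 0 <= k3 ->
  (\int[P]_x (Lf k1 k2 k3 x)%:E)%E = (k1 * Ia + k2 * Ib + k3)%:E.
Proof.
move=> k10 k20 k30.
have [Iae Ia0] := IaE.
have [Ibe Ib0] := IbE.
rewrite /Lf.
under eq_integral do rewrite !EFinD.
rewrite ge0_integralD//; last 2 first.
- by move=> x _; rewrite adde_ge0// lee_fin mulr_ge0.
- apply: emeasurable_funD; apply/measurable_EFinP; exact: measurable_funM.
rewrite ge0_integralD//; last 4 first.
- by move=> x _; rewrite lee_fin mulr_ge0.
- apply/measurable_EFinP; exact: measurable_funM.
- by move=> x _; rewrite lee_fin mulr_ge0.
- apply/measurable_EFinP; exact: measurable_funM.
under eq_integral do rewrite EFinM.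
rewrite ge0_integralZl_EFin//; last 2 first.
- by move=> x _; rewrite lee_fin.
- exact/measurable_EFinP.
under [X in (_ + X + _)%E]eq_integral do rewrite EFinM.
rewrite ge0_integralZl_EFin//; last 2 first.
- by move=> x _; rewrite lee_fin.
- exact/measurable_EFinP.
rewrite intcst Iae Ibe.
by rewrite -!EFinM -!EFinD.
Qed.


Definition sfun x := a x + b x + 1.

Lemma Lf_add k1 k2 k3 d x :
  Lf (k1 + d) (k2 + d) (k3 + d) x = Lf k1 k2 k3 x + d * sfun x.
Proof. rewrite /Lf /sfun; ring. Qed.

Lemma Lf_ge0 k1 k2 k3 x : 0 <= k1 -> 0 <= k2 -> 0 <= k3 -> 0 <= Lf k1 k2 k3 x.
Proof. by move=> *; rewrite /Lf !addr_ge0// mulr_ge0. Qed.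

Lemma sfun_ge1 x : 1 <= sfun x.
Proof. by rewrite /sfun lerDr addr_ge0. Qed.

Lemma neg_pt_cvg (y0 s : R) : 0 <= y0 -> 1 <= s ->
  (neg (y0 + n.+1%:R^-1 * s) @[n --> \oo] --> neg y0)%classic.
Proof.
move=> y00 s1.
have s0 : 0 < s by apply: lt_le_trans s1.
have ypos n : 0 < y0 + n.+1%:R^-1 * s.
  by apply: ltr_wpDl => //; rewrite mulr_gt0.
have -> : (fun n => neg (y0 + n.+1%:R^-1 * s)) =
    (fun n => (maxr (- ln (y0 + n.+1%:R^-1 * s)) 0)%:E).
  by apply/funext => n; rewrite /neg ifN// -ltNge.
have [y0z|y0p] := eqVneq y0 0.
  rewrite y0z /neg lexx; apply/cvgeyPge => A.
  have e0 : 0 < expR (- A) / s by rewrite divr_gt0// expR_gt0.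
  near=> n.
  rewrite lee_fin le_max; apply/orP; left.
  rewrite lerNr -[X in _ <= X]expRK ler_ln ?posrE ?expR_gt0 ?add0r ?mulr_gt0//.
  rewrite -ler_pdivlMr//; apply: ltW.
  near: n; exact: (near_infty_natSinv_lt (PosNum e0)).
have {}y0p : 0 < y0 by rewrite lt_neqAle eq_sym y0p.
rewrite /neg ifN -?ltNge//.
apply: cvg_EFin; first by apply: nearW.
have hy : (y0 + n.+1%:R^-1 * s @[n --> \oo] --> y0)%classic.
  rewrite -[X in _ --> X]addr0; apply: cvgD; first exact: cvg_cst.
  rewrite -(mul0r s); apply: cvgMr_tmp; exact: cvg_harmonic.
have hc : {for y0, continuous (fun y : R => maxr (- ln y) 0)}.
  apply: (@continuous_max _ _ (fun y : R => - ln y) (fun _ => 0)).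
    by apply: continuousN; exact: continuous_ln.
  exact: cst_continuous.
exact: (cvg_comp _ _ hy hc).
Unshelve. all: by end_near.
Qed.


Lemma mct k1 k2 k3 : 0 <= k1 -> 0 <= k2 -> 0 <= k3 ->
  ((\int[P]_x neg (Lf (k1 + n.+1%:R^-1) (k2 + n.+1%:R^-1) (k3 + n.+1%:R^-1) x))%E
     @[n --> \oo] --> (\int[P]_x neg (Lf k1 k2 k3 x))%E)%classic.
Proof.
move=> k10 k20 k30.
pose g n x := neg (Lf (k1 + n.+1%:R^-1) (k2 + n.+1%:R^-1) (k3 + n.+1%:R^-1) x).
have := @cvg_monotone_convergence _ _ _ P setT measurableT g.
have mg n : measurable_fun setT (g n) by apply: mneg; exact: mLf.
have g0 n x : [set: R] x -> (0 <= g n x)%E by move=> _; exact: neg_ge0.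
have ndg x : [set: R] x -> {homo g^~ x : n m / (n <= m)%N >-> (n <= m)%E}.
  move=> _ n m nm; rewrite /g; apply: neg_anti.
  rewrite !Lf_add lerD2l ler_pM2r; last by apply: lt_le_trans (sfun_ge1 x).
  by rewrite lef_pV2 ?posrE// ler_nat.
move=> /(_ mg g0 ndg).
congr (_ --> _); apply: eq_integral => x _.
apply: cvg_lim => //.
rewrite /g; under eq_fun do rewrite Lf_add.
apply: neg_pt_cvg; [exact: Lf_ge0 | exact: sfun_ge1].
Qed.


Definition Sc := Ia + Ib + 1.
Lemma Sc_ge1 : 1 <= Sc.
Proof. have [_ ?] := IaE; have [_ ?] := IbE; rewrite /Sc; lra. Qed.

Lemma int_le3 (f g h : R -> \bar R) :
  measurable_fun setT f -> measurable_fun setT g -> measurable_fun setT h ->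
  (forall x, 0 <= f x)%E -> (forall x, 0 <= g x)%E -> (forall x, 0 <= h x)%E ->
  (forall x, f x <= g x + h x)%E ->
  (\int[P]_x f x <= \int[P]_x g x + \int[P]_x h x)%E.
Proof.
move=> mf mg mh f0 g0 h0 fgh.
rewrite -ge0_integralD//.
apply: ge0_le_integral => //.
by apply: emeasurable_funD.
Qed.

Lemma mposLf k1 k2 k3 : measurable_fun setT (fun x => pos (Lf k1 k2 k3 x)).
Proof. apply: mpos; exact: mLf. Qed.
Lemma mnegLf k1 k2 k3 : measurable_fun setT (fun x => neg (Lf k1 k2 k3 x)).
Proof. apply: mneg; exact: mLf. Qed.

Lemma IB1 k1 k2 k3 k1' k2' k3' d : 0 <= k1 -> 0 <= k2 -> 0 <= k3 -> 0 <= d ->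
  (forall x, Lf k1' k2' k3' x <= Lf k1 k2 k3 x + d * sfun x) ->
  (\int[P]_x pos (Lf k1' k2' k3' x) <= \int[P]_x pos (Lf k1 k2 k3 x) + (d * Sc)%:E)%E.
Proof.
move=> k10 k20 k30 d0 h.
have -> : (d * Sc)%:E = (\int[P]_x (Lf d d d x)%:E)%E.
  by rewrite intLf// /Sc; congr (_%:E); ring.
apply: int_le3.
- exact: mposLf.
- exact: mposLf.
- by apply/measurable_EFinP; exact: mLf.
- by move=> x; exact: pos_ge0.
- by move=> x; exact: pos_ge0.
- by move=> x; rewrite lee_fin; apply: Lf_ge0.
move=> x; have -> : Lf d d d x = d * sfun x by rewrite /Lf /sfun; ring.
apply: pos_up => //; first exact: Lf_ge0.
by rewrite mulr_ge0// ?(le_trans ler01 (sfun_ge1 x)).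
Qed.

Lemma IB2 k1 k2 k3 k1' k2' k3' l : 0 <= k1 -> 0 <= k2 -> 0 <= k3 -> 1 <= l ->
  (forall x, Lf k1 k2 k3 x / l <= Lf k1' k2' k3' x) ->
  (\int[P]_x pos (Lf k1 k2 k3 x) <= \int[P]_x pos (Lf k1' k2' k3' x) + (ln l)%:E)%E.
Proof.
move=> k10 k20 k30 l1 h.
rewrite -[X in (_ + X)%E](intcst P).
apply: int_le3.
- exact: mposLf.
- exact: mposLf.
- exact: measurable_cst.
- by move=> x; exact: pos_ge0.
- by move=> x; exact: pos_ge0.
- by move=> x; rewrite lee_fin ln_ge0.
move=> x; apply: pos_down => //; exact: Lf_ge0.
Qed.

Lemma IB3 k1 k2 k3 k1' k2' k3' l : 0 <= k1 -> 0 <= k2 -> 0 <= k3 -> 1 <= l ->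
  (forall x, Lf k1 k2 k3 x / l <= Lf k1' k2' k3' x) ->
  (\int[P]_x neg (Lf k1' k2' k3' x) <= \int[P]_x neg (Lf k1 k2 k3 x) + (ln l)%:E)%E.
Proof.
move=> k10 k20 k30 l1 h.
rewrite -[X in (_ + X)%E](intcst P).
apply: int_le3.
- exact: mnegLf.
- exact: mnegLf.
- exact: measurable_cst.
- by move=> x; exact: neg_ge0.
- by move=> x; exact: neg_ge0.
- by move=> x; rewrite lee_fin ln_ge0.
move=> x; apply: neg_down => //; exact: Lf_ge0.
Qed.

Lemma IB4 k1 k2 k3 k1' k2' k3' d :
  (forall x, Lf k1' k2' k3' x <= Lf k1 k2 k3 x + d * sfun x) ->
  (\int[P]_x neg (Lf (k1 + d) (k2 + d) (k3 + d) x) <= \int[P]_x neg (Lf k1' k2' k3' x))%E.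
Proof.
move=> h; apply: ge0_le_integral => //.
all: try (by apply: mnegLf); try (by move=> x _; exact: neg_ge0).
by move=> x _; apply: neg_anti; rewrite Lf_add.
Qed.

Lemma Pfin k1 k2 k3 : 0 <= k1 -> 0 <= k2 -> 0 <= k3 ->
  exists r : R, (\int[P]_x pos (Lf k1 k2 k3 x))%E = r%:E /\ 0 <= r.
Proof.
move=> k10 k20 k30.
have h0 : (0 <= \int[P]_x pos (Lf k1 k2 k3 x))%E.
  by apply: integral_ge0 => x _; exact: pos_ge0.
have h1 : (\int[P]_x pos (Lf k1 k2 k3 x) <= (k1 * Ia + k2 * Ib + k3)%:E)%E.
  rewrite -intLf//; apply: ge0_le_integral => //.
  all: try (by apply: mposLf); try (by move=> x _; exact: pos_ge0).
  all: try (by apply/measurable_EFinP; exact: mLf).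
  by move=> x _; apply: pos_le; exact: Lf_ge0.
move: h0 h1; case: (\int[P]_x pos (Lf k1 k2 k3 x))%E => // r.
by move=> r0 _; exists r; split => //; rewrite -lee_fin.
Qed.


Definition al (q : R * R * R) := q.1.2 * q.1.1 / q.2.
Definition be (q : R * R * R) := q.1.2 * (1 - q.1.1) / q.2.
Definition ga (q : R * R * R) := 1 - q.1.2.

Lemma Yform (q : R * R * R) x :
  cp a b q.1.1 x / q.2 * q.1.2 - q.1.2 + 1 = Lf (al q) (be q) (ga q) x.
Proof. rewrite /cp /Lf /al /be /ga; ring. Qed.

Definition PPq q := (\int[P]_x pos (Lf (al q) (be q) (ga q) x))%E.
Definition NNq q := (\int[P]_x neg (Lf (al q) (be q) (ga q) x))%E.

Lemma Vsplit (q : R * R * R) : Vgame P a b q.1.1 q.1.2 q.2 = (PPq q - NNq q)%E.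
Proof.
rewrite /Vgame integralE /PPq /NNq; congr (_ - _)%E; apply: eq_integral => x _;
  by rewrite ?funeposE ?funenegE Yform ?elog_pos ?elog_neg.
Qed.

Lemma cvg_al (q0 : R * R * R) : q0.2 != 0 -> al @ q0 --> al q0.
Proof.
move=> u0; apply: cvgM; first apply: cvgM.
- by apply: cvg_comp; [exact: cvg_fst|exact: cvg_snd].
- by apply: cvg_comp; [exact: cvg_fst|exact: cvg_fst].
by apply: cvgV => //; exact: cvg_snd.
Qed.

Lemma cvg_be (q0 : R * R * R) : q0.2 != 0 -> be @ q0 --> be q0.
Proof.
move=> u0; apply: cvgM; first apply: cvgM.
- by apply: cvg_comp; [exact: cvg_fst|exact: cvg_snd].
- apply: cvgB; first exact: cvg_cst.
  by apply: cvg_comp; [exact: cvg_fst|exact: cvg_fst].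
by apply: cvgV => //; exact: cvg_snd.
Qed.

Lemma cvg_ga (q0 : R * R * R) : ga @ q0 --> ga q0.
Proof.
apply: cvgB; first exact: cvg_cst.
by apply: cvg_comp; [exact: cvg_fst|exact: cvg_snd].
Qed.

Section core.
Variables (D : set (R * R * R)) (q0 : R * R * R).
Hypothesis Dsub : forall q, D q -> [/\ 0 <= q.1.1 <= 1, 0 <= q.1.2 <= 1 & 0 < q.2].
Hypothesis Dq0 : D q0.
Let F := within D (nbhs q0).

Lemma k_ge0 q : D q -> [/\ 0 <= al q, 0 <= be q & 0 <= ga q].
Proof.
move=> /Dsub [/andP[p0 p1] /andP[t0 t1] u0].
rewrite /al /be /ga; split.
- by rewrite divr_ge0 ?mulr_ge0// ltW.
- by rewrite divr_ge0 ?mulr_ge0 ?subr_ge0// ltW.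
- by rewrite subr_ge0.
Qed.

Lemma nearD : \forall q \near F, D q.
Proof. exact: withinT. Qed.

Let u0n : q0.2 != 0.
Proof. by have [_ _ /lt0r_neq0] := Dsub _ Dq0. Qed.

Lemma ub_coord (c : R * R * R -> R) d : c @ q0 --> c q0 -> 0 < d ->
  \forall q \near F, c q <= c q0 + d.
Proof.
move=> cc d0.
have h : \forall t \near F, c t < c q0 + d.
  by apply: (cvgr_lt (c q0) (cvg_within_filter D cc)); rewrite ltrDl.
by apply: filterS h => q /ltW.
Qed.

Lemma lb_coord (c : R * R * R -> R) l : c @ q0 --> c q0 -> 1 < l ->
  (forall q, D q -> 0 <= c q) -> \forall q \near F, c q0 / l <= c q.
Proof.
move=> cc l1 c0.
have l0 : 0 < l by lra.
have [cz|cp] := eqVneq (c q0) 0.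
  rewrite cz mul0r; apply: filterS nearD; exact: c0.
have cq0 : 0 < c q0 by rewrite lt_neqAle eq_sym cp c0.
have h : \forall t \near F, c q0 / l < c t.
  by apply: (cvgr_gt (c q0) (cvg_within_filter D cc)); rewrite ltr_pdivrMr// ltr_pMr.
by apply: filterS h => q /ltW.
Qed.

Lemma near_ub d : 0 < d -> \forall q \near F,
  forall x, Lf (al q) (be q) (ga q) x <= Lf (al q0) (be q0) (ga q0) x + d * sfun x.
Proof.
move=> d0.
near=> q => x.
rewrite -Lf_add /Lf.
have ha : al q <= al q0 + d by near: q; exact: ub_coord (cvg_al _ u0n) d0.
have hb : be q <= be q0 + d by near: q; exact: ub_coord (cvg_be _ u0n) d0.
have hg : ga q <= ga q0 + d by near: q; exact: ub_coord (cvg_ga q0) d0.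
apply: lerD => //; apply: lerD; apply: ler_wpM2r => //.
Unshelve. all: by end_near.
Qed.

Lemma near_lb l : 1 < l -> \forall q \near F,
  forall x, Lf (al q0) (be q0) (ga q0) x / l <= Lf (al q) (be q) (ga q) x.
Proof.
move=> l1.
near=> q => x.
have -> : Lf (al q0) (be q0) (ga q0) x / l =
   Lf (al q0 / l) (be q0 / l) (ga q0 / l) x by rewrite /Lf; ring.
rewrite /Lf.
have ha : al q0 / l <= al q.
  near: q; apply: lb_coord (cvg_al _ u0n) l1 _ => q /k_ge0[]//.
have hb : be q0 / l <= be q.
  near: q; apply: lb_coord (cvg_be _ u0n) l1 _ => q /k_ge0[]//.
have hg : ga q0 / l <= ga q.
  near: q; apply: lb_coord (cvg_ga q0) l1 _ => q /k_ge0[]//.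
apply: lerD => //; apply: lerD; apply: ler_wpM2r => //.
Unshelve. all: by end_near.
Qed.


Lemma core_cvg : ((fun q => (PPq q - NNq q)%E) @ F --> (PPq q0 - NNq q0)%E)%classic.
Proof.
have [ha0 hb0 hg0] := k_ge0 _ Dq0.
have [P0 [P0e P0ge]] := Pfin _ _ _ ha0 hb0 hg0.
have mc := mct _ _ _ ha0 hb0 hg0.
pose Nn n := (\int[P]_x neg (Lf (al q0 + n.+1%:R^-1) (be q0 + n.+1%:R^-1)
   (ga q0 + n.+1%:R^-1) x))%E.
have B1 d : 0 < d -> \forall q \near F, (PPq q <= P0%:E + (d * Sc)%:E)%E.
  move=> d0; apply: filterS (near_ub _ d0) => q h.
  by rewrite -P0e; apply: IB1 => //; exact: ltW.
have B4 n : \forall q \near F, (Nn n <= NNq q)%E.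
  have dn : 0 < (n.+1%:R : R)^-1 by rewrite invr_gt0.
  apply: filterS (near_ub _ dn) => q h.
  exact: IB4 h.
have B2 l : 1 < l -> \forall q \near F, (P0%:E <= PPq q + (ln l)%:E)%E.
  move=> l1; apply: filterS (near_lb _ l1) => q h.
  by rewrite -P0e; apply: IB2 => //; exact: ltW.
have B3 l : 1 < l -> \forall q \near F, (NNq q <= NNq q0 + (ln l)%:E)%E.
  move=> l1; apply: filterS (near_lb _ l1) => q h.
  by apply: IB3 => //; exact: ltW.
have B5 q : (0 <= NNq q)%E by apply: integral_ge0 => x _; exact: neg_ge0.
have B6 q : (0 <= PPq q)%E by apply: integral_ge0 => x _; exact: pos_ge0.
have Sc0 : 0 < Sc by apply: lt_le_trans Sc_ge1.
have P0e' : PPq q0 = P0%:E by exact: P0e.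
have [N0e|[N0r N0e]] : NNq q0 = +oo%E \/ exists r, NNq q0 = r%:E.
  case: (NNq q0) (B5 q0) => [r _|_|]; [by right; exists r|by left|by rewrite leeNy_eq].
- rewrite P0e' N0e.
  have -> : (P0%:E - +oo = -oo)%E by [].
  apply/cvgeNyPle => A.
  have mc' : (Nn n @[n --> \oo] --> +oo%E)%classic by rewrite -N0e.
  have [n hn] := filter_ex (cvgey_ge mc' (P0 + Sc - A)).
  near=> q.
  have h1 : (PPq q <= P0%:E + (1 * Sc)%:E)%E by near: q; exact: B1 ltr01.
  have h4 : (Nn n <= NNq q)%E by near: q; exact: B4 n.
  apply: le_trans (leeB h1 h4) _.
  move: hn; case: (Nn n) => [r||] //=.
  + move=> h; rewrite lee_fin in h.
    rewrite -[X in (X <= _)%E]/((P0 + 1 * Sc - r)%:E) lee_fin; lra.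
  + by move=> _; rewrite leNye.
- rewrite P0e' N0e -EFinB.
  have key e : 0 < e -> \forall q \near F, exists p m : R, PPq q = p%:E /\
      NNq q = m%:E /\ `|p - P0| <= e /\ `|m - N0r| <= e.
    move=> e0.
    have mc' : (Nn n @[n --> \oo] --> N0r%:E)%classic by rewrite -N0e.
    move/fine_cvgP: mc' => [fn cn].
    have hgt : \forall n \near \oo, N0r - e < fine (Nn n).
      by apply: (cvgr_gt N0r cn); lra.
    have : \forall n \near \oo, Nn n \is a fin_num /\ N0r - e < fine (Nn n).
      by near=> n; split; near: n.
    move=> /filter_ex [n [fnn gtn]].
    set l := expR e.
    have l1 : 1 < l by rewrite expR_gt1.
    have lnl : ln l = e by rewrite /l expRK.
    have d0 : 0 < e / Sc by rewrite divr_gt0.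
    near=> q.
    have h1 : (PPq q <= P0%:E + (e / Sc * Sc)%:E)%E by near: q; exact: B1.
    have h2 : (P0%:E <= PPq q + (ln l)%:E)%E by near: q; exact: B2.
    have h3 : (NNq q <= NNq q0 + (ln l)%:E)%E by near: q; exact: B3.
    have h4 : (Nn n <= NNq q)%E by near: q; exact: B4 n.
    rewrite divfK ?gt_eqF// in h1.
    rewrite lnl in h2 h3; rewrite N0e in h3; rewrite -(fineK fnn) in h4.
    move: h1 h2 h3 h4 (B5 q) (B6 q); case: (PPq q) => [p||];
      case: (NNq q) => [m||] //=.
    rewrite !lee_fin => h1 h2 h3 h4 h5 h6.
    exists p, m; split => //; split => //.
    by rewrite !ler_norml; split; apply/andP; split; lra.
  apply/fine_cvgP; split.
    apply: filterS (key _ ltr01) => q [p [m [hP [hN _]]]].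
    by rewrite /= hP hN -EFinB.
  apply/cvgrPdist_le => e e0.
  have e20 : 0 < e / 2 by rewrite divr_gt0.
  apply: filterS (key _ e20) => q [p [m [hP [hN [hp hm]]]]].
  rewrite /= hP hN -EFinB /=.
  move: hp hm; rewrite !ler_norml => /andP[? ?] /andP[? ?].
  apply/andP; split; lra.
Unshelve. all: by end_near.
Qed.

End core.


Lemma V_cont (D : set (R * R * R))
  (Dsub : forall q, D q -> [/\ 0 <= q.1.1 <= 1, 0 <= q.1.2 <= 1 & 0 < q.2]) :
  {within D, continuous (fun q : R * R * R => Vgame P a b q.1.1 q.1.2 q.2)}.
Proof.
apply/subspace_continuousP => q0 Dq0.
have -> : (fun q : R * R * R => Vgame P a b q.1.1 q.1.2 q.2) =
  (fun q => (PPq q - NNq q)%E) by apply/funext => q; exact: Vsplit.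
exact: core_cvg.
Qed.

End meas.

Theorem lemmaD15 (R : realType) (P : probability R R) (a b : R -> R) (r : R) :
  game P a -> game P b ->
  (forall p : R, 0 <= p <= 1 -> hgame P a b p <= fgame P a b r p) ->
  {within Dbar P a b r,
     continuous (fun q : R * R * R => Vgame P a b q.1.1 q.1.2 q.2)}.
Proof.
move=> [ma a0 ia _] [mb b0 ib _] _.
apply: V_cont => //.
by case=> [[p t] u] /= [].
Qed.
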